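(* Consider the noisy urn process $(A_t,B_t)_{t\in\mathbb{N}}$ described in the context with $\kappa=1$ almost surely (the leaky urn), started at $(A_1,B_1)=(1,0)$, and let $\tau:=\min\{t>1:|A_t|+|B_t|=1\}$ (the time to absorption of the leaky urn). Then $\mathbb{E}[\tau]=\infty$.
   Context: Noisy urn with a $\mathbb{Z}$-valued $\kappa$ (here $\kappa\equiv1$), $\kappa_t$ i.i.d. copies, $\mathrm{sgn}(x)=x/|x|$: a Markov chain on $\mathbb{Z}^2\setminus\{(0,0)\}$. If $A_tB_t\ne0$: from $(a,b)$ it moves to $(a,b+\mathrm{sgn}(a))$ with probability $|a|/(|a|+|b|)$ and to $(a-\mathrm{sgn}(b),b)$ with probability $|b|/(|a|+|b|)$. If $A_t\ne0,B_t=0$: $(A_{t+1},B_{t+1})=(\mathrm{sgn}(A_t)\max\{1,|A_t|-\kappa_t\},\mathrm{sgn}(A_t))$. If $A_t=0,B_t\ne0$: $(A_{t+1},B_{t+1})=(-\mathrm{sgn}(B_t),\mathrm{sgn}(B_t)\max\{1,|B_t|-\kappa_t\})$. *)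

(* Defs.v *)
From HB Require Import structures.
From mathcomp Require Import all_boot all_order all_algebra.
From mathcomp Require Import all_classical all_reals all_analysis.
Set Implicit Arguments. Unset Strict Implicit. Unset Printing Implicit Defensive.
Import Order.TTheory GRing.Theory Num.Theory.
Local Open Scope ring_scope.

Definition state := (int * int)%type.

Definition sgn (x : int) : int := Num.sg x.

Definition kappa : int := 1.

(* One-step transition probability of the noisy urn with kappa = 1.
   From (0,0) (not a state of the chain) we put probability 0. *)
Definition trans (R : realType) (s s' : state) : R :=
  let: (a, b) := s in
  if (a != 0) && (b != 0) then
    (if s' == (a, b + sgn a) then (`|a|%:~R / (`|a| + `|b|)%:~R) else 0) +
    (if s' == (a - sgn b, b) then (`|b|%:~R / (`|a| + `|b|)%:~R) else 0)
  else if (a != 0) && (b == 0) then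
    (if s' == (sgn a * Num.max 1 (`|a| - kappa), sgn a) then 1 else 0)
  else if (a == 0) && (b != 0) then
    (if s' == (- sgn b, sgn b * Num.max 1 (`|b| - kappa)) then 1 else 0)
  else 0.

(* Cylinder event: (X_1,...,X_n) = (s 1, ..., s n). Time starts at 1. *)
Definition cyl (T : Type) (X : nat -> T -> state) (n : nat) (s : nat -> state)
  : set T := [set w | forall i, (1 <= i <= n)%N -> X i w = s i].

(* X is the leaky urn chain on the probability space (T,P), started at (1,0):
   the events {X_t = s} are measurable, and the finite-dimensional
   distributions are those of the Markov chain with kernel [trans]. *)
Definition is_leaky_urn (d : measure_display) (T : measurableType d)
  (R : realType) (P : probability T R) (X : nat -> T -> state) : Prop :=
  [/\ (forall t (s : state), measurable (X t @^-1` [set s])),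
      (forall s, P (cyl X 1 s) = ((s 1%N == ((1 : int), (0 : int)))%:R)%:E) &
      (forall n s, (0 < n)%N ->
         P (cyl X n.+1 s) = (P (cyl X n s) * (trans R (s n) (s n.+1))%:E)%E)].

(* tau(w) = min { t > 1 : |A_t| + |B_t| = 1 }, = +oo if that set is empty. *)
Definition tau (R : realType) (T : Type) (X : nat -> T -> state) (w : T)
  : \bar R :=
  ereal_inf [set ((t%:R : R)%:E) | t in
     [set t : nat | (1 < t)%N /\ `|(X t w).1| + `|(X t w).2| = 1]].

(* Main.v *)
Require Import Defs.
From HB Require Import structures.
From mathcomp Require Import all_boot all_order all_algebra.
From mathcomp Require Import all_classical all_reals all_analysis.
From mathcomp Require Import zify.
From mathcomp.algebra_tactics Require Import ring lra.
Import Order.TTheory GRing.Theory Num.Theory.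
Local Open Scope ring_scope.

Definition hz (x : state) : int :=
  let: (a, b) := x in
  if (a != 0) && (b != 0) then a * a + b * b + sgn (a * b) * (`|a| - `|b|)
  else a * a + b * b - `|a| - `|b|.

Lemma hz_int (a b : int) : a != 0 -> b != 0 ->
  hz (a, b) = a * a + b * b + sgn (a * b) * (`|a| - `|b|).
Proof. by rewrite /hz => -> ->. Qed.

Lemma hz_ax (a b : int) : (a == 0) || (b == 0) ->
  hz (a, b) = a * a + b * b - `|a| - `|b|.
Proof. by rewrite /hz; case/orP => /eqP ->; rewrite ?eqxx ?andbF. Qed.

Lemma hz_I1 (a b : int) : a != 0 -> b != 0 ->
  hz (a, b + sgn a) = hz (a, b) + 2 * sgn (a * b) * `|b|.
Proof.
move=> a0 b0; rewrite hz_int // /sgn.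
have [e|ne] := eqVneq (b + Num.sg a) 0.
  rewrite hz_ax ?e ?eqxx ?orbT //; move: a0 b0 e; rewrite /sgn; nia.
rewrite hz_int //; move: a0 b0 ne; rewrite /sgn; nia.
Qed.

Lemma hz_I2 (a b : int) : a != 0 -> b != 0 ->
  hz (a - sgn b, b) = hz (a, b) - 2 * sgn (a * b) * `|a|.
Proof.
move=> a0 b0; rewrite hz_int // /sgn.
have [e|ne] := eqVneq (a - Num.sg b) 0.
  rewrite hz_ax ?e ?eqxx ?orTb //; move: a0 b0 e; rewrite /sgn; nia.
rewrite hz_int //; move: a0 b0 ne; rewrite /sgn; nia.
Qed.

Lemma hz_ge0 x : 0 <= hz x.
Proof.
case: x => a b; rewrite /hz /sgn sgrM.
have [ha|[ha|ha]] : a < 0 \/ 0 < a \/ a = 0 by lia.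
all: have [hb|[hb|hb]] : b < 0 \/ 0 < b \/ b = 0 by lia.
all: try subst a; try subst b; rewrite ?eqxx ?andbF ?andFb.
all: try (have -> : (a != 0) = true by lia); try (have -> : (b != 0) = true by lia).
all: rewrite /=; nia.
Qed.

Lemma hz_ab (a b : int) : a != 0 -> b != 0 -> `|a| * `|b| <= hz (a, b).
Proof.
move=> a0 b0; rewrite hz_int // /sgn sgrM.
have [ha|ha] : a < 0 \/ 0 < a by lia.
all: have [hb|hb] : b < 0 \/ 0 < b by lia.
all: nia.
Qed.

Lemma hz_dead (a b : int) : `|a| + `|b| = 1 -> hz (a, b) = 0.
Proof.
move=> e; have : (a == 0) || (b == 0) by apply/orP; lia.
by move=> h; rewrite hz_ax //; lia.
Qed.

Lemma hz_axA (a : int) : a != 0 -> `|a| != 1 ->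
  hz (sgn a * Num.max 1 (`|a| - kappa), sgn a) = hz (a, 0).
Proof.
move=> a0 a1; rewrite /kappa (hz_ax a 0) ?eqxx ?orbT // hz_int /sgn ?sgrM; try lia.
have [ha|ha] : a < 0 \/ 0 < a by lia.
all: nia.
Qed.

Lemma hz_axB (b : int) : b != 0 -> `|b| != 1 ->
  hz (- sgn b, sgn b * Num.max 1 (`|b| - kappa)) = hz (0, b).
Proof.
move=> b0 b1; rewrite /kappa (hz_ax 0 b) ?eqxx ?orTb // hz_int /sgn ?sgrM; try lia.
have [hb|hb] : b < 0 \/ 0 < b by lia.
all: nia.
Qed.

Lemma xlnx_le {R : realType} (y H : R) : 0 <= y -> 0 < H ->
  y * ln y <= y * ln H + y * (y - H) / H.
Proof.
move=> y0 H0; have [->|yp] := eqVneq y 0; first by rewrite !mul0r add0r.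
have yp' : 0 < y by rewrite lt_def yp y0.
have : ln (y / H) <= y / H - 1.
  have := @le_ln1Dx R (y / H - 1); rewrite addrCA subrr addr0; apply.
  by have := divr_gt0 yp' H0; lra.
rewrite ln_div ?posrE // => h.
have : y * (ln y - ln H) <= y * (y / H - 1) by rewrite ler_wpM2l // ltW.
move=> h2; suff : y * (y - H) / H = y * (y / H - 1) by move=> ->; lra.
by field; rewrite gt_eqF.
Qed.

Lemma xlnx_ge {R : realType} (y K : R) : 0 <= y -> 0 < K ->
  y * ln K - K <= y * ln y.
Proof.
move=> y0 K0; have [->|yp] := eqVneq y 0; first by rewrite !mul0r sub0r oppr_le0 ltW.
have yp' : 0 < y by rewrite lt_def yp y0.
have : ln (K / y) <= K / y - 1.
  have := @le_ln1Dx R (K / y - 1); rewrite addrCA subrr addr0; apply.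
  by have := divr_gt0 K0 yp'; lra.
rewrite ln_div ?posrE // => h.
have : y * (ln K - ln y) <= y * (K / y - 1) by rewrite ler_wpM2l // ltW.
have -> : y * (K / y - 1) = K - y by field; rewrite gt_eqF.
lra.
Qed.

Lemma drift_real (R : realType) (A B H s y1 y2 : R) : 0 < A -> 0 < B -> 0 < H ->
  A * B <= H -> (s = 1 \/ s = -1) -> y1 = H + 2 * s * B -> y2 = H - 2 * s * A ->
  0 <= y1 -> 0 <= y2 ->
  A / (A + B) * (y1 * ln y1) + B / (A + B) * (y2 * ln y2) <= H * ln H + 4.
Proof.
move=> A0 B0 H0 ABH hs e1 e2 y10 y20.
have w1 : 0 <= A / (A + B) by rewrite divr_ge0 // ltW // addr_gt0.
have w2 : 0 <= B / (A + B) by rewrite divr_ge0 // ltW // addr_gt0.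
have i1 := ler_wpM2l w1 (@xlnx_le _ _ _ y10 H0).
have i2 := ler_wpM2l w2 (@xlnx_le _ _ _ y20 H0).
have e : A / (A + B) * (y1 * ln H + y1 * (y1 - H) / H) +
         B / (A + B) * (y2 * ln H + y2 * (y2 - H) / H) = H * ln H + 4 * (A * B / H).
  have ABn : A + B != 0 by rewrite gt_eqF // addr_gt0.
  have Hn : H != 0 by rewrite gt_eqF.
  by rewrite e1 e2; case: hs => ->; field; rewrite Hn ABn.
have : A * B / H <= 1 by rewrite ler_pdivrMr // mul1r.
lra.
Qed.

Definition alive (x : state) : bool := `|x.1| + `|x.2| != 1.

Definition succ (x : state) : seq state :=
  let: (a, b) := x in
  if (a != 0) && (b != 0) then [:: (a, b + sgn a); (a - sgn b, b)]
  else if (a != 0) && (b == 0) then [:: (sgn a * Num.max 1 (`|a| - kappa), sgn a)]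
  else if (a == 0) && (b != 0) then [:: (- sgn b, sgn b * Num.max 1 (`|b| - kappa))]
  else [::].

Definition Hr (R : realType) (x : state) : R := (hz x)%:~R.
Definition Fr (R : realType) (x : state) : R := Hr R x * ln (Hr R x).

Lemma Hr_dead (R : realType) x : ~~ alive x -> Hr R x = 0.
Proof. case: x => a b; rewrite /alive /= negbK => /eqP e; by rewrite /Hr hz_dead. Qed.

Lemma Fr_dead (R : realType) x : ~~ alive x -> Fr R x = 0.
Proof. by move=> h; rewrite /Fr Hr_dead // mul0r. Qed.

Lemma Hr_ge0 (R : realType) x : 0 <= Hr R x.
Proof. by rewrite /Hr ler0z hz_ge0. Qed.

Lemma trans_ge0 (R : realType) x y : 0 <= trans R x y.
Proof.
case: x => a b; rewrite /trans.
repeat case: ifP => _.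
all: rewrite ?addr0 ?add0r ?ler01 ?lexx //.
all: try apply: addr_ge0.
all: apply: divr_ge0; rewrite ler0z; lia.
Qed.

Lemma trans_int1 (R : realType) (a b : int) : a != 0 -> b != 0 ->
  trans R (a, b) (a, b + sgn a) = `|a|%:~R / (`|a| + `|b|)%:~R.
Proof.
move=> a0 b0; rewrite /trans a0 b0 /= eqxx.
have -> : ((a, b + sgn a) == (a - sgn b, b)) = false.
  by rewrite xpair_eqE; apply/negbTE; move: a0; rewrite /sgn; lia.
by rewrite addr0.
Qed.

Lemma trans_int2 (R : realType) (a b : int) : a != 0 -> b != 0 ->
  trans R (a, b) (a - sgn b, b) = `|b|%:~R / (`|a| + `|b|)%:~R.
Proof.
move=> a0 b0; rewrite /trans a0 b0 /= eqxx.
have -> : ((a - sgn b, b) == (a, b + sgn a)) = false.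
  by rewrite xpair_eqE; apply/negbTE; move: a0; rewrite /sgn; lia.
by rewrite add0r.
Qed.

Lemma hz00 : hz (0, 0) = 0.
Proof. by rewrite hz_ax ?eqxx //; lia. Qed.

Lemma sum_succ_H (R : realType) x : alive x ->
  \sum_(y <- succ x) trans R x y * Hr R y = Hr R x.
Proof.
case: x => a b; rewrite /alive /= => al.
have [a0|a0] := eqVneq a 0; have [b0|b0] := eqVneq b 0.
- by subst; rewrite /succ /= big_nil /Hr hz00.
- subst a; rewrite /succ /= big_seq1 eqxx mul1r.
  by rewrite /Hr hz_axB //; move: al; lia.
- subst b; rewrite /succ /= big_seq1 eqxx mul1r.
  by rewrite /Hr hz_axA //; move: al; lia.
have ne : ((a, b + sgn a) == (a - sgn b, b)) = false.
  by rewrite xpair_eqE; apply/negbTE; move: a0; rewrite /sgn; lia.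
rewrite /succ /= big_cons big_seq1 !eqxx ne eq_sym ne addr0 add0r.
rewrite /Hr hz_I1 // hz_I2 // !(intrD, intrM, intrB).
have Sn : (`|a|%:~R + `|b|%:~R : R) != 0.
  by rewrite gt_eqF // addr_gt0 // ltr0z; lia.
by field.
Qed.

Lemma sum_succ_F (R : realType) x : alive x ->
  \sum_(y <- succ x) trans R x y * Fr R y <= Fr R x + 4.
Proof.
case: x => a b; rewrite /alive /= => al.
have [a0|a0] := eqVneq a 0; have [b0|b0] := eqVneq b 0.
- by subst; rewrite /succ /= big_nil /Fr /Hr hz00 mul0r add0r.
- subst a; rewrite /succ /= big_seq1 eqxx mul1r.
  by rewrite /Fr /Hr hz_axB; [lra| |]; move: al; lia.
- subst b; rewrite /succ /= big_seq1 eqxx mul1r.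
  by rewrite /Fr /Hr hz_axA; [lra| |]; move: al; lia.
have ne : ((a, b + sgn a) == (a - sgn b, b)) = false.
  by rewrite xpair_eqE; apply/negbTE; move: a0; rewrite /sgn; lia.
rewrite /succ /= big_cons big_seq1 !eqxx ne eq_sym ne addr0 add0r intrD.
rewrite /Fr; apply: (@drift_real R _ _ _ ((sgn (a * b))%:~R)).
- by rewrite ltr0z; lia.
- by rewrite ltr0z; lia.
- rewrite /Hr ltr0z; have := @hz_ab a b a0 b0; lia.
- by rewrite /Hr -intrM ler_int hz_ab.
- have [->|->] : sgn (a * b) = 1 \/ sgn (a * b) = -1 by rewrite /sgn; lia.
    by left.
  by right.
- by rewrite /Hr hz_I1 // intrD !intrM.
- by rewrite /Hr hz_I2 // intrB !intrM.
- exact: Hr_ge0.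
- exact: Hr_ge0.
Qed.

Lemma sum_succ_1 (R : realType) x : \sum_(y <- succ x) trans R x y <= 1.
Proof.
case: x => a b.
have [a0|a0] := eqVneq a 0; have [b0|b0] := eqVneq b 0.
- by subst; rewrite /succ /= big_nil.
- by subst a; rewrite /succ /= ?b0 /= big_seq1 eqxx.
- by subst b; rewrite /succ /= ?a0 /= big_seq1 eqxx.
have ne : ((a, b + sgn a) == (a - sgn b, b)) = false.
  by rewrite xpair_eqE; apply/negbTE; move: a0; rewrite /sgn; lia.
rewrite /succ /= a0 b0 /= big_cons big_seq1 !eqxx ne eq_sym ne addr0 add0r intrD.
have Sn : (`|a|%:~R + `|b|%:~R : R) != 0.
  by rewrite gt_eqF // addr_gt0 // ltr0z; lia.
rewrite -mulrDl divff //.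
Qed.

Definition x0 : state := ((0 : int), (0 : int)).
Definition xstart : state := ((1 : int), (0 : int)).

Definition ext (L : seq (seq state)) : seq (seq state) :=
  [seq y :: s | s <- L, y <- [seq z <- succ (head x0 s) | alive z]].

Fixpoint V (k : nat) : seq (seq state) :=
  if k is k'.+1 then ext (V k') else [:: [:: xstart]].

Fixpoint pw (R : realType) (s : seq state) : R :=
  match s with
  | y :: s' => match s' with [::] => 1 | x :: _ => trans R x y * pw R s' end
  | [::] => 1
  end.

Definition Ek (R : realType) k (g : state -> R) :=
  \sum_(s <- V k) pw R s * g (head x0 s).

Definition Kop (R : realType) (g : state -> R) x :=
  \sum_(y <- succ x | alive y) trans R x y * g y.

Lemma V_inv k s : s \in V k ->
  size s = k.+1 /\ (forall j, (j < k)%N -> alive (nth x0 s j)).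
Proof.
elim: k s => [|k IH] s /=.
  by rewrite mem_seq1 => /eqP ->.
move=> /allpairsPdep [s' [y [s'V yin ->]]].
have [sz al] := IH _ s'V.
split; first by rewrite /= sz.
move: yin; rewrite mem_filter => /andP [ya _].
by case=> [|j] //= jk; apply: al.
Qed.

Lemma pw_ge0 (R : realType) s : 0 <= pw R s.
Proof.
elim: s => [|y s IH] //=; case: s IH => [|x s] IH //.
by apply: mulr_ge0 => //; apply: trans_ge0.
Qed.

Lemma E_step (R : realType) k g : Ek R k.+1 g = Ek R k (Kop R g).
Proof.
rewrite /Ek /= /ext big_allpairs_dep; apply: eq_big_seq => s sV.
have [sz _] := V_inv _ _ sV.
case: s sz sV => [|x s] // _ _.
rewrite big_filter /Kop mulr_sumr; apply: eq_bigr => y _ /=.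
by ring.
Qed.

Lemma Kop_H (R : realType) x : alive x -> Kop R (Hr R) x = Hr R x.
Proof.
move=> al; rewrite /Kop big_mkcond -[RHS](@sum_succ_H R x al); apply: eq_bigr => y _.
by case: ifP => // /negbT h; rewrite Hr_dead // mulr0.
Qed.

Lemma Kop_F (R : realType) x : alive x -> Kop R (Fr R) x <= Fr R x + 4.
Proof.
move=> al; rewrite /Kop big_mkcond; apply: le_trans (@sum_succ_F R x al).
apply: ler_sum => y _.
by case: ifP => // /negbT h; rewrite Fr_dead // mulr0.
Qed.

Lemma Kop_1 (R : realType) x : Kop R (fun=> 1) x <= 1.
Proof.
rewrite /Kop big_mkcond; apply: le_trans (sum_succ_1 R x).
apply: ler_sum => y _; rewrite mulr1.
by case: ifP => // _; apply: trans_ge0.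
Qed.

Definition Mk (R : realType) k := Ek R k (fun=> 1).

Lemma Mk_ge0 (R : realType) k : 0 <= Mk R k.
Proof. by apply: sumr_ge0 => s _; rewrite mulr1 pw_ge0. Qed.

Lemma Mk_decr (R : realType) k : Mk R k.+1 <= Mk R k.
Proof.
rewrite /Mk E_step /Ek; apply: ler_sum => s _.
by rewrite mulr1 ler_piMr ?pw_ge0 ?Kop_1.
Qed.

Lemma Mk_decr_le (R : realType) k n : (k <= n)%N -> Mk R n <= Mk R k.
Proof.
elim: n => [|n IH]; first by rewrite leqn0 => /eqP ->.
rewrite leq_eqVlt => /orP [/eqP -> //|]; rewrite ltnS => kn.
exact: le_trans (Mk_decr R n) (IH kn).
Qed.

Lemma V1 : V 1 = [:: [:: ((1 : int), (1 : int)); xstart]].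
Proof. by vm_compute. Qed.

Lemma E1 (R : realType) g : Ek R 1 g = g ((1 : int), (1 : int)).
Proof.
by rewrite /Ek V1 big_seq1 /= !mul1r.
Qed.

Lemma head_alive k s : (0 < k)%N -> s \in V k -> alive (head x0 s).
Proof.
move=> k0 sV; have [sz al] := V_inv _ _ sV.
by case: s sz al sV => [|x s] //= _ al _; apply: (al 0%N).
Qed.

Lemma EH (R : realType) k : (0 < k)%N -> Ek R k (Hr R) = 2.
Proof.
elim: k => [//|k IH] _.
case: k IH => [|k] IH.
  by rewrite E1 /Hr (_ : hz (1, 1) = 2) //; vm_compute.
rewrite E_step -[RHS](IH erefl) /Ek; apply: eq_big_seq => s sV.
by rewrite Kop_H // (head_alive _ _ (ltn0Sn _) sV).
Qed.

Lemma EF_step (R : realType) k : (0 < k)%N ->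
  Ek R k.+1 (Fr R) <= Ek R k (Fr R) + 4 * Mk R k.
Proof.
move=> k0; rewrite E_step /Mk /Ek mulr_sumr -big_split /= !big_seq.
apply: ler_sum => s sV.
rewrite mulr1 [4 * _]mulrC -mulrDr; apply: ler_wpM2l; first exact: pw_ge0.
apply: Kop_F; exact: (head_alive _ _ k0 sV).
Qed.

Lemma EF_up (R : realType) n : (0 < n)%N ->
  Ek R n (Fr R) <= Fr R ((1 : int), (1 : int)) + 4 * \sum_(k < n) Mk R k.
Proof.
elim: n => [//|n IH] _.
case: n IH => [|n] IH.
  rewrite E1 big_ord_recr big_ord0 /= add0r.
  by rewrite lerDl mulr_ge0 // Mk_ge0.
apply: le_trans (EF_step R _ (ltn0Sn n)) _.
rewrite big_ord_recr /= mulrDr addrA lerD2r.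
exact: IH.
Qed.

Lemma EF_low (R : realType) k (K : R) : 0 < K ->
  ln K * Ek R k (Hr R) - K * Mk R k <= Ek R k (Fr R).
Proof.
move=> K0; rewrite /Mk /Ek mulr_sumr mulr_sumr -sumrB.
apply: ler_sum => s _; rewrite mulr1 /Fr.
have := @xlnx_ge R (Hr R (head x0 s)) K (Hr_ge0 _ _) K0.
move=> h; have p := pw_ge0 R s.
have := ler_wpM2l p h; lra.
Qed.

Lemma Mk_unbounded (R : realType) (B : R) : exists N, B < \sum_(k < N) Mk R k.
Proof.
have [B1|B1] := ltrP B 1.
  by exists 1%N; rewrite big_ord_recr big_ord0 /= /Mk /Ek /= big_seq1 /= add0r mulr1.
pose C : R := Fr R ((1 : int), (1 : int)) + 4 * B.
pose C' : R := `|C| + 1.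
pose K : R := expR C'.
have K0 : 0 < K by apply: expR_gt0.
set n := (Num.truncn (K * B)).+1.
exists n.+1.
case: (ltrP B (\sum_(k < n.+1) Mk R k)) => // hB; exfalso.
have h1 : n.+1%:R * Mk R n <= \sum_(k < n.+1) Mk R k.
  have : \sum_(k < n.+1) Mk R n <= \sum_(k < n.+1) Mk R k.
    by apply: ler_sum => i _; apply: Mk_decr_le; rewrite -ltnS ltn_ord.
  by rewrite sumr_const card_ord mulr_natl.
have h2 : K * Mk R n < 1.
  have hn : K * B < n%:R by apply: truncnS_gt.
  have hM := Mk_ge0 R n.
  have : n.+1%:R * Mk R n <= B by apply: le_trans h1 hB.
  rewrite -natr1 => h3.
  have : K * (n%:R * Mk R n) <= K * B.
    by apply: ler_wpM2l; [apply: ltW | have := Mk_ge0 R n; nra].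
  move=> h4; have hK : K * Mk R n * n%:R < n%:R by nra.
  have n0 : 0 < n%:R :> R by rewrite ltr0n.
  by rewrite -(ltr_pM2r n0) mul1r.
have lo := EF_low R n K K0.
have lnK : ln K = C' by rewrite /K expRK.
rewrite EH // lnK in lo.
have up := EF_up R n (ltn0Sn _).
have hs : \sum_(k < n) Mk R k <= B.
  apply: (le_trans _ hB); rewrite [X in _ <= X]big_ord_recr /= lerDl; apply: Mk_ge0.
have hC : C <= `|C| by apply: ler_norm.
have hC0 := normr_ge0 C.
have e1 : C = Fr R ((1 : int), (1 : int)) + 4 * B by [].
have e2 : C' = `|C| + 1 by [].
lra.
Qed.

Local Open Scope classical_set_scope.
Import HBNNSimple.

Lemma succ_uniq x : uniq (succ x).
Proof.
case: x => a b.
have [a0|a0] := eqVneq a 0; have [b0|b0] := eqVneq b 0.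
- by subst; rewrite /succ /=.
- by subst a; rewrite /succ /= ?b0.
- by subst b; rewrite /succ /= ?a0.
have ne : ((a, b + sgn a) == (a - sgn b, b)) = false.
  by rewrite xpair_eqE; apply/negbTE; move: a0; rewrite /sgn; lia.
by rewrite /succ /= a0 b0 /= inE ne.
Qed.

Lemma V_uniq k : uniq (V k).
Proof.
elim: k => [//|k IH] /=.
rewrite /ext; apply: allpairs_uniq_dep => //.
  by move=> s _; apply: filter_uniq; apply: succ_uniq.
by move=> [s1 y1] [s2 y2] _ _ /= [-> ->].
Qed.

Lemma cyl_eq (T : Type) (X : nat -> T -> state) n (f g : nat -> state) :
  (forall i, (1 <= i <= n)%N -> f i = g i) -> cyl X n f = cyl X n g.
Proof.
move=> fg; apply/seteqP; split => w /= h i hi; first by rewrite -fg //; apply: h.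
by rewrite fg //; apply: h.
Qed.

Lemma cyl_meas d (T : measurableType d) (X : nat -> T -> state) :
  (forall t s, measurable (X t @^-1` [set s])) ->
  forall n f, measurable (cyl X n f).
Proof.
move=> hm; elim => [|n IH] f.
  have -> : cyl X 0 f = setT.
    by apply/seteqP; split => w // _ i /andP [h1 h2]; exfalso; lia.
  exact: measurableT.
have -> : cyl X n.+1 f = cyl X n f `&` (X n.+1 @^-1` [set f n.+1]).
  apply/seteqP; split => w /=.
    move=> h; split; last by apply: h; lia.
    by move=> i hi; apply: h; lia.
  move=> [h1 h2] i hi; have [e|ne] := eqVneq i n.+1; first by rewrite e.
  by apply: h1; lia.
exact: measurableI.
Qed.

Definition sfun n (s : seq state) (i : nat) : state := nth x0 s (n - i).

Local Open Scope ereal_scope.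

Lemma P_cyl d (T : measurableType d) (R : realType) (P : probability T R)
  (X : nat -> T -> state) : is_leaky_urn P X ->
  forall k s, s \in V k -> P (cyl X k.+1 (sfun k.+1 s)) = (pw R s)%:E.
Proof.
move=> [hm h1 h2]; elim => [|k IH] s.
  rewrite /= mem_seq1 => /eqP ->.
  by rewrite h1 /sfun /=.
move=> /allpairsPdep [s' [y [s'V yin ->]]].
have [sz _] := V_inv _ _ s'V.
rewrite h2 // (@cyl_eq _ X k.+1 _ (sfun k.+1 s')); last first.
  move=> i /andP [i1 ik]; rewrite /sfun (_ : (k.+2 - i = (k.+1 - i).+1)%N) //; lia.
rewrite IH // /sfun subSnn subnn /=.
case: s' sz s'V yin => [|x s'] //= _ _ _.
by rewrite EFinM muleC.
Qed.

Lemma cyl_disj (T : Type) (X : nat -> T -> state) k s s' :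
  s \in V k -> s' \in V k -> s != s' ->
  cyl X k.+1 (sfun k.+1 s) `&` cyl X k.+1 (sfun k.+1 s') = set0.
Proof.
move=> sV s'V ne; apply/seteqP; split => w //= [c1 c2]; apply: (negP ne).
have [sz _] := V_inv _ _ sV; have [sz' _] := V_inv _ _ s'V.
apply/eqP; apply: (eq_from_nth (x0 := x0)); first by rewrite sz sz'.
move=> j; rewrite sz => jk.
have e : forall t : seq state, nth x0 t j = nth x0 t (k.+1 - (k.+1 - j)).
  by move=> t; rewrite subKn // ltnW.
rewrite (e s) (e s').
have hi : (1 <= k.+1 - j <= k.+1)%N by lia.
by rewrite -[nth _ s _]/(sfun k.+1 s (k.+1 - j)) -[nth _ s' _]/(sfun k.+1 s' (k.+1 - j)) -c1 // -c2.
Qed.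

Definition Ucyl {T : Type} (X : nat -> T -> state) k : set T :=
  \big[setU/set0]_(s <- V k) cyl X k.+1 (sfun k.+1 s).

Lemma big_setI0 (T : Type) (I : eqType) (A : set T) (L : seq I) (B : I -> set T) :
  (forall i, i \in L -> A `&` B i = set0) ->
  A `&` \big[setU/set0]_(i <- L) B i = set0.
Proof.
elim: L => [|i L IH] h; first by rewrite big_nil setI0.
rewrite big_cons setIUr h ?mem_head // set0U IH // => j jL.
by apply: h; rewrite inE jL orbT.
Qed.

Lemma big_setU_meas d (T : measurableType d) (I : Type) (L : seq I) (B : I -> set T) :
  (forall i, measurable (B i)) -> measurable (\big[setU/set0]_(i <- L) B i).
Proof.
move=> h; elim: L => [|i L IH]; first by rewrite big_nil.
by rewrite big_cons; apply: measurableU.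
Qed.

Lemma P_Ucyl d (T : measurableType d) (R : realType) (P : probability T R)
  (X : nat -> T -> state) : is_leaky_urn P X ->
  forall k, P (Ucyl X k) = (Mk R k)%:E.
Proof.
move=> hX k; have [hm _ _] := hX.
have gen : forall L, uniq L -> {subset L <= V k} ->
    P (\big[setU/set0]_(s <- L) cyl X k.+1 (sfun k.+1 s)) = \sum_(s <- L) (pw R s)%:E.
  elim => [|s L IH] uq sub; first by rewrite !big_nil measure0.
  move: uq => /= /andP [sL uq].
  have sV : s \in V k by apply: sub; rewrite mem_head.
  have sub' : {subset L <= V k} by move=> t tL; apply: sub; rewrite inE tL orbT.
  rewrite !big_cons measureU.
  - by congr (_ + _); [exact: (@P_cyl _ _ _ P X hX k s sV) | exact: IH].
  - exact: cyl_meas.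
  - by apply: big_setU_meas => i; apply: cyl_meas.
  apply: big_setI0 => t tL; apply: cyl_disj => //; first exact: sub'.
  by apply/eqP => est; move: sL; rewrite est tL.
rewrite /Ucyl gen ?V_uniq // sumEFin /Mk /Ek.
by congr (_%:E); apply: eq_bigr => s _; rewrite mulr1.
Qed.

Lemma tau_ge0 (R : realType) (T : Type) (X : nat -> T -> state) w : 0 <= tau R X w.
Proof. by apply: le_ereal_inf_tmp => _ [t _ <-]; rewrite lee_fin ler0n. Qed.

Lemma tau_gt (R : realType) (T : Type) (X : nat -> T -> state) k s w :
  s \in V k -> cyl X k.+1 (sfun k.+1 s) w -> ((k.+1)%:R)%:E < tau R X w.
Proof.
move=> sV hw; have [sz al] := V_inv _ _ sV.
apply: (@lt_le_trans _ _ ((k.+2)%:R)%:E); first by rewrite lte_fin ltr_nat.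
apply: le_ereal_inf_tmp => _ [t [t1 ht] <-]; rewrite lee_fin ler_nat.
rewrite leqNgt; apply/negP => tk.
have e : X t w = sfun k.+1 s t by apply: hw; lia.
have := al (k.+1 - t)%N; rewrite /alive -/(sfun k.+1 s t) -e ht eqxx => /(_ _) h.
by have := h ltac:(lia).
Qed.

Local Close Scope ereal_scope.
Lemma count_le (R : realType) (N : nat) (f : nat -> R) (r : R) : 0 <= r ->
  (forall i, f i = 0 \/ f i = 1) ->
  (forall i, (i < N)%N -> f i = 1 -> (i.+1)%:R < r) ->
  \sum_(i < N) f i <= r.
Proof.
move=> r0 f01 hf.
suff : \sum_(i < N) f i <= N%:R /\ \sum_(i < N) f i <= r by case.
elim: N hf => [|N IH] hf; first by rewrite big_ord0 ler0n.
have [h1 h2] := IH (fun i iN => hf i (ltnW iN)).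
rewrite big_ord_recr /=; case: (f01 N) => e.
  by rewrite e addr0 -natr1; split; lra.
have := hf N (ltnSn N) e; rewrite -natr1 => h3.
  by rewrite e; split; lra.
Qed.
Local Open Scope ereal_scope.

Lemma big_setU_mem (T : Type) (I : eqType) (L : seq I) (B : I -> set T) w :
  (\big[setU/set0]_(i <- L) B i) w -> exists2 i, i \in L & B i w.
Proof.
elim: L => [|i L IH]; first by rewrite big_nil.
rewrite big_cons => -[h|h]; first by exists i => //; rewrite mem_head.
by have [j jL hj] := IH h; exists j => //; rewrite inE jL orbT.
Qed.

Theorem corollary3p8 (d : measure_display) (T : measurableType d)
  (R : realType) (P : probability T R) (X : nat -> T -> state) :
  is_leaky_urn P X ->
  \int[P]_w (tau R X w) = +oo.
Proof.
move=> hX; have [hm h1 h2] := hX.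
have mU : forall k, measurable (Ucyl X k).
  by move=> k; apply: big_setU_meas => s; apply: cyl_meas.
have key : forall B : R, B%:E < \int[P]_w tau R X w.
  move=> B; have [N hN] := Mk_unbounded R B.
  pose f : {nnsfun T >-> R}^nat := fun k => indic_nnsfun R (mU k).
  pose h := sum_nnsfun f N.
  have hE : forall w : T, h w = (\sum_(k < N) (\1_(Ucyl X k) w : R))%R.
    by move=> w; rewrite /h sum_nnsfunE.
  have hle : forall w : T, (h w)%:E <= tau R X w.
    move=> w; rewrite hE.
    have t0 := tau_ge0 R T X w.
    move: t0; case Et: (tau R X w) => [r| |] t0; last first.
    - by move: t0; rewrite leeNy_eq.
    - by rewrite leey.
    rewrite lee_fin; apply: (@count_le R N (fun k => \1_(Ucyl X k) w : R) r).
    - by rewrite -lee_fin.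
    - by move=> i; rewrite indicE; case: (w \in _); [right|left].
    move=> i iN; rewrite indicE.
    case: (boolP (w \in Ucyl X i)) => [/set_mem hw _|_]; last first.
      by move/esym/eqP; rewrite oner_eq0.
    have [s sV hs] := @big_setU_mem _ _ _ _ _ hw.
    by have := @tau_gt R T X i s w sV hs; rewrite Et lte_fin.
  apply: (lt_le_trans (y := (\sum_(k < N) Mk R k)%:E)); first by rewrite lte_fin.
  rewrite ge0_integralTE; last by move=> w; apply: tau_ge0.
  apply: (@le_trans _ _ (sintegral P h)); last first.
    by apply: ereal_sup_ubound; exists h.
  have -> : sintegral P h = sintegral P (h \_ setT) by apply: eq_sintegral => w; rewrite patch_setT.
  rewrite -integral_nnsfun //.
  under eq_integral do rewrite hE -sumEFin.
  rewrite ge0_integral_sum //; last first.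
    by move=> k; apply/measurable_realfun.measurable_EFinP; exact: measurable_realfun.measurable_indic.
  rewrite -sumEFin; apply: lee_sum => k _.
  rewrite integral_indic // setIT; have e := @P_Ucyl _ _ _ P X hX k. rewrite -e. done.
move: key; case: (\int[P]_w tau R X w) => [r| |] // key.
  by have := key r; rewrite lte_fin ltxx.
by have := key 0%R.
Qed.
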